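(* Let $\Bbbk$ be an algebraically closed field and let $A=\Bbbk Q/I$ be a selfinjective algebra, where $Q$ is a finite quiver with vertices $1,\dots,r$ and $I\subseteq\Bbbk Q$ is an admissible ideal. Then for every $1\le i\le r$ there is an arrow in $\widetilde Q^+$ ending at vertex $i$.
   Context: $DA=\operatorname{Hom}_\Bbbk(A,\Bbbk)$ with its natural $A$-bimodule structure, and $T(A)=A\ltimes DA$ is the trivial extension, the vector space $A\oplus DA$ with multiplication $(a,f)(b,g)=(ab,ag+fb)$. Let $e_1,\dots,e_r$ be the primitive idempotents of $A$ corresponding to the vertices of $Q$, $A^{\mathrm e}=A\otimes_\Bbbk A^{\mathrm{op}}$, and $\operatorname{soc}_{A^{\mathrm e}}A$ the socle of $A$ as an $A$-bimodule. The quiver $\widetilde Q$ of $T(A)$ has the same vertices as $Q$ and its arrow set is $Q_1\cup\widetilde Q^+$, where $Q_1$ is the arrow set of $Q$ and $\widetilde Q^+$ is the set of new arrows, corresponding to the summand $D(\operatorname{soc}_{A^{\mathrm e}}A)$ of $\operatorname{rad}T(A)/\operatorname{rad}^2T(A)\cong\mathfrak r/\mathfrak r^2\oplus D(\operatorname{soc}_{A^{\mathrm e}}A)$ ($\mathfrak r$ the radical of $A$): the number of arrows of $\widetilde Q^+$ from vertex $i$ to vertex $j$ equals $\dim_\Bbbk e_j D(\operatorname{soc}_{A^{\mathrm e}}A) e_i$. *)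

(* Defs.v *)
From HB Require Import structures.
From mathcomp Require Import all_boot all_order all_algebra all_field.
From Stdlib Require Import ClassicalEpsilon.
Set Implicit Arguments. Unset Strict Implicit. Unset Printing Implicit Defensive.
Import GRing.Theory.
Local Open Scope ring_scope.

Section Defs.
Variables (F : fieldType) (A : falgType F).

Definition is_lmod_action (V : vectType F) (act : A -> V -> V) : Prop :=
  [/\ forall a (c : F) u v, act a (c *: u + v) = c *: act a u + act a v,
      forall (c : F) a b u, act (c *: a + b) u = c *: act a u + act b u,
      forall u, act 1 u = u
    & forall a b u, act (a * b) u = act a (act b u)].

Definition is_lmod_hom (V W : vectType F) (actV : A -> V -> V)
  (actW : A -> W -> W) (f : 'Hom(V, W)) : Prop :=
  forall a v, f (actV a v) = actW a (f v).

Definition injective_lmod (E : vectType F) (actE : A -> E -> E) : Prop :=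
  forall (M N : vectType F) (actM : A -> M -> M) (actN : A -> N -> N),
    is_lmod_action actM -> is_lmod_action actN ->
    forall (i : 'Hom(M, N)), is_lmod_hom actM actN i -> lker i = 0%VS ->
    forall (f : 'Hom(M, E)), is_lmod_hom actM actE f ->
    exists g : 'Hom(N, E), is_lmod_hom actN actE g /\ forall m, g (i m) = f m.

Definition selfinjective : Prop := injective_lmod (fun a (x : A) => a * x).

Section Presentation.
Variables (r : nat) (Q1 : finType) (s t : Q1 -> 'I_r).
(* e v : image of the trivial path at v;  alpha x : image of the arrow x : s x -> t x *)
Variables (e : 'I_r -> A) (alpha : Q1 -> A).

Definition word_img (w : seq Q1) : A := \prod_(x <- w) alpha x.

(* x lies in the image of R^n, R the arrow ideal of kQ *)
Definition in_arrow_pow (n : nat) (x : A) : Prop :=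
  exists ws : seq (seq Q1),
    all (fun w => n <= size w)%N ws /\ x \in <<map word_img ws>>%VS.

(* The algebra morphism kQ -> A, (trivial path at v) |-> e v, (arrow x) |-> alpha x,
   is well defined, surjective, and its kernel I satisfies R^m ⊆ I ⊆ R^2. *)
Definition admissible_presentation : Prop :=
  (* relations of kQ are respected *)
  (forall v w, e v * e w = (if v == w then e v else 0)) /\
  (\sum_(v < r) e v = 1) /\
  (forall x, alpha x = e (t x) * alpha x * e (s x)) /\
  (forall y : A, exists ws : seq (seq Q1),
      y \in <<[seq e v | v <- enum 'I_r] ++ map word_img ws>>%VS) /\
  (* R^m ⊆ I for some m >= 2 *)
  (exists m, (2 <= m)%N /\ forall w, (m <= size w)%N -> word_img w = 0) /\
  (* I ⊆ R^2 *)
  (forall (c : 'I_r -> F) (d : Q1 -> F),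
      in_arrow_pow 2 (\sum_(v < r) c v *: e v + \sum_(x : Q1) d x *: alpha x) ->
      (forall v, c v = 0) /\ (forall x, d x = 0)).
End Presentation.

Definition sub_bimod (U : {vspace A}) : Prop :=
  forall a u, u \in U -> (a * u \in U) /\ (u * a \in U).

Definition simple_sub_bimod (U : {vspace A}) : Prop :=
  [/\ sub_bimod U, U != 0%VS &
      forall W, sub_bimod W -> (W <= U)%VS -> W = 0%VS \/ W = U].

Definition is_bimod_socle (S : {vspace A}) : Prop :=
  (exists Us : seq {vspace A},
      (forall U, U \in Us -> simple_sub_bimod U) /\ S = (\sum_(U <- Us) U)%VS)
  /\ (forall U, simple_sub_bimod U -> (U <= S)%VS).

Definition bimod_socle : {vspace A} := epsilon (inhabits 0%VS) is_bimod_socle.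

Definition dual_sp (S : {vspace A}) := 'Hom(subvs_of S, F^o).

Definition dual_act (S : {vspace A}) (a b : A) (f : dual_sp S) : dual_sp S :=
  linfun (fun m : subvs_of S => f (vsproj S (b * vsval m * a))).

Definition dual_corner (S : {vspace A}) (a b : A) : {vspace dual_sp S} :=
  limg (linfun (fun f : dual_sp S => dual_act a b f)).

(* number of arrows of Q~^+ from vertex j to vertex i:
   dim_k  e_i D(soc_{A^e} A) e_j *)
Definition num_new_arrows (r : nat) (e : 'I_r -> A) (j i : 'I_r) : nat :=
  \dim (dual_corner bimod_socle (e i) (e j)).

End Defs.

(* Main.v *)
Require Import Defs.
From HB Require Import structures.
From mathcomp Require Import all_boot all_order all_algebra all_field.
From Stdlib Require Import ClassicalEpsilon.
Set Implicit Arguments. Unset Strict Implicit. Unset Printing Implicit Defensive.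
Import GRing.Theory.
Local Open Scope ring_scope.

Lemma span_ind (K : fieldType) (V : vectType K) (P : V -> Prop) (X : seq V) :
  P 0 -> (forall x y, P x -> P y -> P (x + y)) -> (forall (c : K) x, P x -> P (c *: x)) ->
  (forall x, x \in X -> P x) -> forall v, v \in <<X>>%VS -> P v.
Proof.
move=> P0 PD PZ; elim: X => [|x X IH] HX v.
  by rewrite span_nil memv0 => /eqP ->.
rewrite span_cons => /memv_addP [y /vlineP [c ->] [z Hz ->]].
apply: PD; first by apply: PZ; apply: HX; rewrite mem_head.
by apply: IH => // u Hu; apply: HX; rewrite in_cons Hu orbT.
Qed.

Lemma lfunE' (K : fieldType) (U V : vectType K) (f : U -> V) :
  (forall (c : K) x y, f (c *: x + y) = c *: f x + f y) -> forall x, linfun f x = f x.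
Proof.
move=> Hf x.
pose L : {linear U -> V} := HB.pack f (GRing.isLinear.Build K U V *:%R f Hf).
exact: (lfunE L x).
Qed.

Lemma exists_max (P : nat -> Prop) (B : nat) :
  P 0%N -> (forall n, P n -> (n <= B)%N) -> exists n, P n /\ forall k, P k -> (k <= n)%N.
Proof.
move=> P0 HB.
apply: NNPP => H.
have step : forall n, P n -> exists k, P k /\ (n < k)%N.
  move=> n Pn; apply: NNPP => H2; apply: H; exists n; split => // k Pk.
  by rewrite leqNgt; apply/negP => lt; apply: H2; exists k.
have : forall j, exists n, P n /\ (j <= n)%N.
  elim=> [|j [n [Pn lejn]]]; first by exists 0%N.
  have [k [Pk ltnk]] := step n Pn; exists k; split => //; exact: leq_ltn_trans lejn ltnk.
move=> /(_ B.+1) [n [Pn le]]; have := HB n Pn; rewrite leqNgt => /negP; apply.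
exact: le.
Qed.

Lemma zfoo (V : zmodType) (a b u w : V) : a - u = b - w -> u - w = a - b.
Proof.
move=> E; apply/eqP; rewrite -subr_eq0.
have -> : u - w - (a - b) = (b - w) - (a - u).
  by rewrite !opprB addrACA [RHS]addrACA (addrC u).
by rewrite E subrr.
Qed.

Section Main.
Variables (k : closedFieldType) (A : falgType k) (r : nat) (Q1 : finType)
  (s t : Q1 -> 'I_r) (e : 'I_r -> A) (alpha : Q1 -> A).
Hypothesis ee : forall v w, e v * e w = (if v == w then e v else 0).
Hypothesis esum : \sum_(v < r) e v = 1.
Hypothesis ealpha : forall x, alpha x = e (t x) * alpha x * e (s x).
Hypothesis surj : forall y : A, exists ws : seq (seq Q1),
      y \in <<[seq e v | v <- enum 'I_r] ++ map (word_img alpha) ws>>%VS.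
Variable m : nat.
Hypothesis m2 : (2 <= m)%N.
Hypothesis Hm : forall w, (m <= size w)%N -> word_img alpha w = 0.
Hypothesis adm : forall (c : 'I_r -> k) (d : Q1 -> k),
      in_arrow_pow alpha 2 (\sum_(v < r) c v *: e v + \sum_(x : Q1) d x *: alpha x) ->
      (forall v, c v = 0) /\ (forall x, d x = 0).

Lemma eid v : e v * e v = e v.
Proof. by rewrite ee eqxx. Qed.

Lemma e_alpha v y : e v * alpha y = if t y == v then alpha y else 0.
Proof.
rewrite {1}(ealpha y) !mulrA ee; case: eqP => [->|/eqP ne]; last first.
  by rewrite eq_sym (negbTE ne) !mul0r.
by rewrite eqxx -ealpha.
Qed.

Lemma alpha_e v y : alpha y * e v = if s y == v then alpha y else 0.
Proof.
rewrite {1}(ealpha y) -!mulrA ee; case: eqP => [_|_]; last first.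
  by rewrite !mulr0.
by rewrite mulrA -ealpha.
Qed.

Lemma e_neq0 v : e v != 0.
Proof.
apply/negP => /eqP ev0.
have [] := @adm (fun w => (w == v)%:R) (fun _ => 0).
  rewrite [X in _ + X]big1 ?addr0; last by move=> x _; rewrite scale0r.
  rewrite (bigD1 v) //= eqxx scale1r ev0 add0r big1; last first.
    by move=> w /negbTE ->; rewrite scale0r.
  by exists [::]; split => //; rewrite mem0v.
by move=> /(_ v); rewrite eqxx => /eqP; rewrite oner_eq0.
Qed.

Lemma word_cons y w : word_img alpha (y :: w) = alpha y * word_img alpha w.
Proof. by rewrite /word_img big_cons. Qed.

Lemma word_rcons y w : word_img alpha (rcons w y) = word_img alpha w * alpha y.
Proof. by rewrite /word_img -cats1 big_cat /= big_seq1. Qed.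

Lemma P2_0 n : in_arrow_pow alpha n 0.
Proof. by exists [::]; split => //; rewrite mem0v. Qed.

Lemma P2_D n x y : in_arrow_pow alpha n x -> in_arrow_pow alpha n y ->
  in_arrow_pow alpha n (x + y).
Proof.
move=> [ws1 [H1 X1]] [ws2 [H2 X2]]; exists (ws1 ++ ws2); split.
  by rewrite all_cat H1 H2.
by rewrite map_cat span_cat memv_add.
Qed.

Lemma P2_Z n (c : k) x : in_arrow_pow alpha n x -> in_arrow_pow alpha n (c *: x).
Proof. by move=> [ws [H X]]; exists ws; split => //; rewrite memvZ. Qed.

Lemma P2_sum n (I : finType) (F : I -> A) : (forall i, in_arrow_pow alpha n (F i)) ->
  in_arrow_pow alpha n (\sum_i F i).
Proof.
move=> H; apply: (big_ind (in_arrow_pow alpha n)) => //; [exact: P2_0|exact: P2_D].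
Qed.

Lemma decomp y c : exists l : k, in_arrow_pow alpha 2 (alpha y * c - l *: alpha y).
Proof.
have [ws Hc] := surj c.
move: c Hc; apply: span_ind.
- by exists 0; rewrite mulr0 scale0r subr0; exact: P2_0.
- move=> a b [la Ha] [lb Hb]; exists (la + lb).
  have -> : alpha y * (a + b) - (la + lb) *: alpha y =
     (alpha y * a - la *: alpha y) + (alpha y * b - lb *: alpha y).
    by rewrite mulrDr scalerDl opprD !addrA; congr (_ + _); rewrite addrAC.
  exact: P2_D.
- move=> c a [la Ha]; exists (c * la).
  rewrite -scalerAr -scalerA -scalerBr; exact: P2_Z.
- move=> a; rewrite mem_cat => /orP [/mapP [v _ ->]|/mapP [w _ ->]].
    rewrite alpha_e; case: eqP => _.
      by exists 1; rewrite scale1r subrr; exact: P2_0.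
    by exists 0; rewrite scale0r subrr; exact: P2_0.
  case: w => [|y' w].
    by exists 1; rewrite /word_img big_nil mulr1 scale1r subrr; exact: P2_0.
  exists 0; rewrite scale0r subr0 -word_cons.
  by exists [:: [:: y, y' & w]]; split => //; apply: memv_span; rewrite mem_head.
Qed.

Lemma sum_sumU (V : nmodType) (F : (Q1 + unit)%type -> V) :
  \sum_o F o = \sum_y F (inl y) + F (inr tt).
Proof.
rewrite big_sumType; congr (_ + _).
by rewrite (bigD1 tt) //= big1 ?addr0 // => -[].
Qed.

Definition Nt := {ffun (Q1 + unit)%type -> A}.
Definition actN (a : A) (n : Nt) : Nt := [ffun o => a * n o].

Lemma actN_mod : is_lmod_action actN.
Proof.
split.
- by move=> a c u v; apply/ffunP => o; rewrite !ffunE mulrDr scalerAr.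
- by move=> c a b u; apply/ffunP => o; rewrite !ffunE mulrDl scalerAl.
- by move=> u; apply/ffunP => o; rewrite !ffunE mul1r.
- by move=> a b u; apply/ffunP => o; rewrite !ffunE mulrA.
Qed.

Lemma actA_mod : is_lmod_action (fun a (x : A) => a * x).
Proof.
split.
- by move=> a c u v; rewrite mulrDr scalerAr.
- by move=> c a b u; rewrite mulrDl scalerAl.
- by move=> u; rewrite mul1r.
- by move=> a b u; rewrite mulrA.
Qed.

Lemma soc_right (SI : selfinjective A) i :
  exists x, x != 0 /\ x * e i = x /\ forall y, x * alpha y = 0.
Proof.
apply: NNPP => H.
have H0 : forall x, x * e i = x -> (forall y, x * alpha y = 0) -> x = 0.
  move=> x H1 H2; apply: NNPP => /eqP nx; apply: H; exists x; split => //.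
pose iF (a : A) : Nt := [ffun o => match o with inl y => a * alpha y | inr _ => a - a * e i end].
have iF_lin : forall (c : k) x y, iF (c *: x + y) = c *: iF x + iF y.
  move=> c x y; apply/ffunP => o; rewrite !ffunE /=; case: o => [y'|_].
    by rewrite mulrDl -scalerAl.
  by rewrite mulrDl -scalerAl scalerBr opprD !addrA; congr (_ - _); rewrite addrAC.
pose fF (a : A) : A := a * e i.
have fF_lin : forall (c : k) x y, fF (c *: x + y) = c *: fF x + fF y.
  by move=> c x y; rewrite /fF mulrDl -scalerAl.
have Hh1 : is_lmod_hom (fun a (x : A) => a * x) actN (linfun iF).
  by move=> a v; rewrite !lfunE' //; apply/ffunP => o; rewrite !ffunE; case: o => [y|_];
    rewrite ?mulrBr !mulrA.
have Hk : lker (linfun iF) = 0%VS.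
  apply/eqP/lker0P => a b; rewrite !lfunE' // => Hab.
  apply/eqP; rewrite -subr_eq0; apply/eqP; apply: H0.
    have := congr1 (fun n : Nt => n (inr tt)) Hab; rewrite !ffunE /= => E.
    by rewrite mulrBl; apply: zfoo; rewrite E.
  move=> y; have := congr1 (fun n : Nt => n (inl y)) Hab; rewrite !ffunE /= => E.
  by rewrite mulrBl E subrr.
have Hh2 : is_lmod_hom (fun a (x : A) => a * x) (fun a (x : A) => a * x) (linfun fF).
  by move=> a v; rewrite !lfunE' // /fF mulrA.
have [g [Hg Hgi]] := @SI A Nt _ actN actA_mod actN_mod (linfun iF) Hh1 Hk (linfun fF) Hh2.
pose c o := g [ffun o' => ((o' == o)%:R : A)].
have gdec : forall n : Nt, g n = \sum_o n o * c o.
  move=> n; have En : n = \sum_o actN (n o) [ffun o' => ((o' == o)%:R : A)].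
    apply/ffunP => o'; rewrite sum_ffunE (bigD1 o') //= big1 ?addr0.
      by rewrite !ffunE eqxx mulr1.
    by move=> o; rewrite eq_sym => /negbTE no; rewrite !ffunE no mulr0.
  by rewrite {1}En linear_sum; apply: eq_bigr => o _; exact: Hg.
have Ei : e i = \sum_y (if t y == i then alpha y * c (inl y) else 0).
  have E1 : e i = e i * g (linfun iF 1) by rewrite Hgi lfunE' // /fF mul1r eid.
  rewrite {1}E1 -Hg gdec sum_sumU !ffunE /= lfunE' // !ffunE /= mul1r.
  rewrite mulrBr mulr1 eid subrr mul0r addr0; apply: eq_bigr => y _.
  by rewrite !ffunE mul1r e_alpha; case: eqP => _ //; rewrite mul0r.
pose lam y := epsilon (inhabits 0) (fun l : k => in_arrow_pow alpha 2 (alpha y * c (inl y) - l *: alpha y)).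
have Hlam : forall y, in_arrow_pow alpha 2 (alpha y * c (inl y) - lam y *: alpha y).
  by move=> y; rewrite /lam; apply: (@epsilon_spec k (inhabits 0) (fun l : k => in_arrow_pow alpha 2 (alpha y * c (inl y) - l *: alpha y))); exact: decomp.
have [] := @adm (fun v => (v == i)%:R) (fun y => - (if t y == i then lam y else 0)).
  have -> : \sum_(v < r) (v == i)%:R *: e v = e i.
    rewrite (bigD1 i) //= eqxx scale1r big1 ?addr0 // => v /negbTE ->.
    by rewrite scale0r.
  rewrite Ei -big_split /=; apply: P2_sum => y; case: eqP => _.
    by rewrite scaleNr; exact: Hlam.
  by rewrite oppr0 scale0r addr0; exact: P2_0.
by move=> /(_ i); rewrite eqxx => /eqP; rewrite oner_eq0.
Qed.

Lemma simple_z (SI : selfinjective A) i :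
  exists z j, [/\ z != 0, e j * z = z, z * e i = z & simple_sub_bimod <[z]>%VS].
Proof.
have [x [nx [xe xa]]] := soc_right SI i.
pose P n := exists w, size w = n /\ word_img alpha w * x != 0.
have P0 : P 0%N by exists [::]; split => //; rewrite /word_img big_nil mul1r.
have PB : forall n, P n -> (n <= m)%N.
  move=> n [w [<- nw]]; rewrite leqNgt; apply/negP => lt.
  by move: nw; rewrite Hm ?mul0r ?eqxx // ltnW.
have [n [[w [sw nw]] nmax]] := exists_max P0 PB.
set x' := word_img alpha w * x in nw.
have x'a : forall y, alpha y * x' = 0.
  move=> y; apply/eqP; apply: NNPP => ny.
  have : P n.+1.
    exists (y :: w); split; first by rewrite /= sw.
    by rewrite word_cons -mulrA; apply/negP.
  by move=> /nmax; rewrite ltnn.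
have [j nj] : exists j, e j * x' != 0.
  apply: NNPP => H; move: nw; rewrite -[x']mul1r -esum mulr_suml big1 ?eqxx //.
  by move=> j _; apply/eqP; apply: NNPP => nj; apply: H; exists j; apply/negP.
set z := e j * x' in nj.
have ze : z * e i = z by rewrite /z /x' -!mulrA xe.
have za : forall y, z * alpha y = 0 by move=> y; rewrite /z /x' -!mulrA xa !mulr0.
have az : forall y, alpha y * z = 0.
  by move=> y; rewrite /z mulrA alpha_e; case: eqP => _; rewrite ?x'a ?mul0r.
have ez : forall v, e v * z = if v == j then z else 0.
  by move=> v; rewrite /z mulrA ee; case: eqP => [->|_]; rewrite ?mul0r.
exists z, j; split => //; first by rewrite ez eqxx.
have gen : forall a, a * z \in <[z]>%VS /\ z * a \in <[z]>%VS.
  move=> a; have [ws Ha] := surj a; move: a Ha; apply: span_ind.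
  - by rewrite mul0r mulr0 mem0v.
  - by move=> a b [H1 H2] [H3 H4]; rewrite mulrDl mulrDr !memvD.
  - by move=> c a [H1 H2]; rewrite -scalerAl -scalerAr !memvZ.
  - move=> a; rewrite mem_cat => /orP [/mapP [v _ ->]|/mapP [w' _ ->]].
      rewrite ez -ze -mulrA ee; split; case: eqP => _;
        by rewrite ?memv_line ?mulr0 ?mem0v.
    split.
      case/lastP: w' => [|w' y]; first by rewrite /word_img big_nil mul1r memv_line.
      by rewrite word_rcons -mulrA az mulr0 mem0v.
    case: w' => [|y w']; first by rewrite /word_img big_nil mulr1 memv_line.
    by rewrite word_cons mulrA za mul0r mem0v.
have sb : sub_bimod <[z]>%VS.
  move=> a u /vlineP [c ->]; rewrite -scalerAr -scalerAl.
  by have [H1 H2] := gen a; rewrite !memvZ.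
split => //.
  by apply/eqP => H; move: nj; have := memv_line z; rewrite H memv0 => /eqP ->; rewrite eqxx.
move=> W sW WU; case: (eqVneq W 0%VS) => [->|nW]; [by left|right].
have uW := memv_pick W; have nu : vpick W != 0 by rewrite vpick0.
have /vlineP [c Ec] := subvP WU _ uW.
have nc : c != 0 by apply/eqP => c0; move: nu; rewrite Ec c0 scale0r eqxx.
have zW : z \in W.
  have -> : z = c^-1 *: vpick W by rewrite Ec scalerA mulVf // scale1r.
  by rewrite memvZ.
by apply: subv_anti; rewrite WU /= -memvE.
Qed.
End Main.
Lemma socle_exists (F : fieldType) (A : falgType F) : exists S : {vspace A}, is_bimod_socle S.
Proof.
pose P n := exists Us : seq {vspace A},
  (forall U, U \in Us -> simple_sub_bimod U) /\ \dim (\sum_(U <- Us) U)%VS = n.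
have P0 : P 0%N by exists [::]; split => //; rewrite big_nil dimv0.
have PB : forall n, P n -> (n <= \dim (fullv : {vspace A}))%N.
  by move=> n [Us [_ <-]]; apply: dimvS; apply: subvf.
have [n [[Us [HUs dUs]] nmax]] := exists_max P0 PB.
exists (\sum_(U <- Us) U)%VS; split; first by exists Us.
move=> U sU.
have : P (\dim (U + \sum_(U <- Us) U)%VS).
  exists (U :: Us); split; last by rewrite big_cons.
  by move=> V; rewrite in_cons => /orP [/eqP ->|]; [|apply: HUs].
move=> /nmax le.
have E : (\sum_(U <- Us) U)%VS = (U + \sum_(U <- Us) U)%VS.
  by apply/eqP; rewrite eqEdim addvSr dUs le.
by rewrite E addvSl.
Qed.

Lemma final (k : fieldType) (A : falgType k) (S : {vspace A}) (z a b : A) :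
  z \in S -> z != 0 -> b * z * a = z -> (0 < \dim (dual_corner S a b))%N.
Proof.
move=> zS nz Ez.
set v := vsproj S z.
have nv : v != 0.
  by apply/eqP => v0; move: nz; rewrite -(vsprojK zS) -/v v0 linear0 eqxx.
have [idx nidx] : exists idx, coord (vbasis fullv) idx v != 0.
  apply: NNPP => H; move: nv; rewrite (coord_vbasis (memvf v)) big1 ?eqxx //.
  move=> idx _; have : coord (vbasis fullv) idx v = 0.
    by apply/eqP; apply: NNPP => n; apply: H; exists idx; apply/negP.
  by move=> ->; rewrite scale0r.
pose f : dual_sp S := linfun (coord (vbasis fullv) idx : subvs_of S -> k^o).
have fv : f v != 0 by rewrite lfunE.
pose D := dual_act a b f.
have DE : forall g : dual_sp S, forall x,
    dual_act a b g x = g (vsproj S (b * vsval x * a)).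
  move=> g x; rewrite /dual_act lfunE' // => c x1 y1.
  by rewrite !linearP /= mulrDr mulrDl -scalerAr -scalerAl !linearP.
have DinC : D \in dual_corner S a b.
  rewrite /dual_corner; have -> : D = linfun (fun g => dual_act a b g) f.
    rewrite lfunE' // => c g h; apply/lfunP => x.
    by rewrite add_lfunE scale_lfunE !DE add_lfunE scale_lfunE.
  exact: memv_img (memvf f).
rewrite lt0n dimv_eq0; apply/eqP => H; move: DinC; rewrite H memv0 => /eqP D0.
move: fv; have := DE f v; rewrite -/D D0 zero_lfunE /v vsprojK // Ez => <-.
by rewrite eqxx.
Qed.

Theorem proposition3p3 (k : closedFieldType) (A : falgType k)
  (r : nat) (Q1 : finType) (s t : Q1 -> 'I_r) (e : 'I_r -> A) (alpha : Q1 -> A) :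
  admissible_presentation s t e alpha ->
  selfinjective A ->
  forall i : 'I_r, exists j : 'I_r, (0 < num_new_arrows e j i)%N.
Proof.
move=> [ee [esum [ealpha [surj [[m [m2 Hm]] adm]]]]] SI i.
have [z [j [nz ejz zei sU]]] := simple_z ee esum ealpha surj Hm adm SI i.
exists j; rewrite /num_new_arrows.
have [S0 HS0] := socle_exists A.
have HS : is_bimod_socle (@bimod_socle _ A).
  by rewrite /bimod_socle; apply: epsilon_spec; exists S0.
have zS : z \in @bimod_socle _ A by rewrite memvE; apply: HS.2.
by apply: final zS nz _; rewrite ejz zei.
Qed.
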